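(* Let $D$ be a finite digraph and let $k$ be a positive integer. Then $\pi_k(D) \leq \alpha'_k(D)$ and $\chi'_k(D) \leq \lambda_k(D)$.
   Context: Paths are directed paths. A path partition of $D$ is a collection of vertex-disjoint paths of $D$ covering $V(D)$. The $k$-norm of a path partition $\mathcal{P}$ is $|\mathcal{P}|_k=\sum_{P\in\mathcal{P}}\min\{|V(P)|,k\}$, and $\pi_k(D)$ is the minimum $k$-norm over all path partitions of $D$. A partial $k$-dicoloring of $D$ is a collection $\{S_1,\dots,S_k\}$ of $k$ pairwise disjoint vertex sets of $D$ each of which induces an acyclic subdigraph; $\alpha'_k(D)$ is the maximum number of vertices covered by a partial $k$-dicoloring of $D$. A dicoloring of $D$ is a partition of $V(D)$ into sets each inducing an acyclic subdigraph; the $k$-norm of a dicoloring $\mathcal{S}$ is $|\mathcal{S}|_k=\sum_{S\in\mathcal{S}}\min\{|S|,k\}$, and $\chi'_k(D)$ is the minimum $k$-norm over all dicolorings of $D$. A $k$-pack is a collection of $k$ vertex-disjoint paths of $D$; $\lambda_k(D)$ is the maximum number of vertices covered by a $k$-pack of $D$. *)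

(* Defs.v *)
From mathcomp Require Import all_boot.
From mathcomp Require Import boolp.
Set Implicit Arguments. Unset Strict Implicit. Unset Printing Implicit Defensive.

Record digraph : Type := Digraph {
  dvert : finType;
  darc : rel dvert;
  darc_irr : irreflexive darc }.

Section Digraph.
Variable D : digraph.
Local Notation V := (dvert D).
Local Notation E := (@darc D).

Definition is_dipath (p : seq V) : bool :=
  if p is x :: q then uniq p && path E x q else false.

Definition path_partition (P : seq (seq V)) : bool :=
  all is_dipath P && perm_eq (flatten P) (enum V).

Definition path_knorm (k : nat) (P : seq (seq V)) : nat :=
  \sum_(p <- P) minn (size p) k.

Definition acyclic_set (S : {set V}) : Prop :=
  forall c : seq V, c != [::] -> {subset c <= S} -> uniq c -> ~~ cycle E c.

Definition pi_pred (k : nat) : pred nat := fun n =>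
  `[< exists P, path_partition P /\ path_knorm k P = n >].

Lemma pi_ex k : exists n, pi_pred k n.
Proof.
exists (path_knorm k [seq [:: v] | v <- enum V]); apply/asboolP.
eexists; split; last reflexivity.
apply/andP; split; first by apply/allP => p /mapP [v _ ->] /=.
suff -> : flatten [seq [:: v] | v <- enum V] = enum V by [].
by elim: (enum V) => //= x s ->.
Qed.

Definition pi_k (k : nat) : nat := ex_minn (pi_ex k).

Definition alpha_pred (k : nat) : pred nat := fun n =>
  `[< exists C : 'I_k -> {set V},
        (forall i, acyclic_set (C i)) /\
        (forall i j, i != j -> [disjoint C i & C j]) /\
        #|\bigcup_(i < k) C i| = n >].

Lemma alpha_ex k : exists n, alpha_pred k n.
Proof.
exists 0; apply/asboolP; exists (fun _ => set0); split; last split.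
- by move=> _ c /eqP; case: c => // x c _ /(_ x); rewrite inE eqxx in_set0 => /(_ isT).
- by move=> i j _; rewrite -setI_eq0 set0I.
- by rewrite big1 ?cards0.
Qed.

Lemma alpha_ub k n : alpha_pred k n -> n <= #|V|.
Proof. by move=> /asboolP [C [_ [_ <-]]]; apply: max_card. Qed.

Definition alpha'_k (k : nat) : nat := ex_maxn (alpha_ex k) (@alpha_ub k).

Definition chi_pred (k : nat) : pred nat := fun n =>
  `[< exists S : {set {set V}},
        partition S [set: V] /\ (forall A, A \in S -> acyclic_set A) /\
        \sum_(A in S) minn #|A| k = n >].

Lemma chi_ex k : exists n, chi_pred k n.
Proof.
pose S := [set [set v] | v : V].
exists (\sum_(A in S) minn #|A| k); apply/asboolP; exists S; split; last split=> //.
- apply/and3P; split.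
  + apply/eqP/setP => x; rewrite in_setT; apply/bigcupP.
    by exists [set x]; [apply/imsetP; exists x | rewrite in_set1].
  + apply/trivIsetP => A B /imsetP [a _ ->] /imsetP [b _ ->] ab.
    rewrite disjoints1 in_set1; apply: contra ab => /eqP ->; by [].
  + by apply/imsetP => -[x _] /setP /(_ x); rewrite in_set0 in_set1 eqxx.
- move=> A /imsetP [a _ ->] c c0 sub _.
  case: c c0 sub => // x [|y c] _ sub /=.
  + by rewrite andbT darc_irr.
  + have /set1P -> := sub x (mem_head _ _).
    have /set1P -> : y \in [set a] by apply: sub; rewrite !inE eqxx orbT.
    by rewrite darc_irr.
Qed.

Definition chi'_k (k : nat) : nat := ex_minn (chi_ex k).

(* k-packs: k vertex-disjoint paths (READING: at most k nonempty paths,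
   equivalently k paths where empty paths are allowed) *)
Definition lambda_pred (k : nat) : pred nat := fun n =>
  `[< exists Q : seq (seq V),
        size Q <= k /\ all is_dipath Q /\ uniq (flatten Q) /\ size (flatten Q) = n >].

Lemma lambda_ex k : exists n, lambda_pred k n.
Proof. by exists 0; apply/asboolP; exists [::]. Qed.

Lemma lambda_ub k n : lambda_pred k n -> n <= #|V|.
Proof.
move=> /asboolP [Q [_ [_ [u <-]]]].
by rewrite -(card_uniqP u); apply: max_card.
Qed.

Definition lambda_k (k : nat) : nat := ex_maxn (lambda_ex k) (@lambda_ub k).

End Digraph.

(* Main.v *)
Require Import Defs.
From mathcomp Require Import all_boot.
From mathcomp Require Import zify.
From mathcomp Require Import boolp.
Set Implicit Arguments. Unset Strict Implicit. Unset Printing Implicit Defensive.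

Lemma count_iota_lt k n : count (fun i => i < k) (iota 0 n) = minn n k.
Proof.
elim: n => [|n IH]; first by rewrite /= ?min0n.
rewrite -addn1 iotaD count_cat IH /= add0n addn0; lia.
Qed.

Lemma count_iota_eq j n : count (fun i => i == j) (iota 0 n) = (j < n).
Proof.
elim: n => [|n IH]; first by rewrite /= ?min0n.
rewrite -addn1 iotaD count_cat IH /= add0n addn0; lia.
Qed.

Lemma rev_iotaS n : rev (iota 0 n.+1) = n :: rev (iota 0 n).
Proof. by rewrite -addn1 iotaD rev_cat /= add0n. Qed.

Lemma acyclic_sub (D : digraph) (A B : {set dvert D}) :
  A \subset B -> acyclic_set B -> acyclic_set A.
Proof.
move=> /subsetP AB acB c c0 sub u; apply: acB => // x /sub; exact: AB.
Qed.

Lemma acyclic_set1 (D : digraph) (s : dvert D) : acyclic_set [set s].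
Proof.
move=> c c0 sub u; case: c c0 sub u => // x [|y c] _ sub u /=.
  by rewrite andbT darc_irr.
have /set1P -> := sub x (mem_head _ _).
have /set1P -> : y \in [set s] by apply: sub; rewrite !inE eqxx orbT.
by rewrite darc_irr.
Qed.

Lemma acyclic_set0 (D : digraph) : acyclic_set (@set0 (dvert D)).
Proof.
by move=> [|x c] // _ /(_ x (mem_head _ _)); rewrite inE.
Qed.

Lemma path_stay (D : digraph) (A B : {set dvert D}) :
  (forall a z, a \in A -> z \in B -> ~~ darc a z) ->
  forall r x, x \in A -> {subset r <= A :|: B} -> path (@darc D) x r -> {subset r <= A}.
Proof.
move=> nAB; elim=> [|y r IH] x xA sub //= /andP [xy pr].
have yA : y \in A.
  have := sub y (mem_head _ _); rewrite inE => /orP [//|yB].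
  by move: (nAB _ _ xA yB); rewrite xy.
move=> z; rewrite inE => /orP [/eqP -> //|zr].
apply: (IH y) => // w wr; apply: sub; by rewrite inE wr orbT.
Qed.

Lemma acyclic_union (D : digraph) (A B : {set dvert D}) :
  acyclic_set A -> acyclic_set B ->
  (forall a z, a \in A -> z \in B -> ~~ darc a z) -> acyclic_set (A :|: B).
Proof.
move=> acA acB nAB c c0 sub u.
case hA: (has (fun x => x \in A) c).
  move/hasP: hA => [a ac aA].
  case: (rot_to ac) => i c' hrot.
  have sub' : {subset (a :: c') <= A :|: B}.
    by move=> z; rewrite -hrot mem_rot; apply: sub.
  apply/negP => cyc.
  have cyc' : cycle (@darc D) (a :: c') by rewrite -hrot rot_cycle.
  have subA : {subset a :: c' <= A}.
    move=> z; rewrite inE => /orP [/eqP -> //|zc].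
    move: cyc' => /= pc.
    have := path_stay nAB aA _ pc; apply.
      move=> w; rewrite mem_rcons inE => /orP [/eqP ->|wc]; first by rewrite inE aA.
      by apply: sub'; rewrite inE wc orbT.
    by rewrite mem_rcons inE zc orbT.
  move: (acA (a :: c') isT subA); rewrite -hrot rot_uniq u rot_cycle cyc.
  by move=> /(_ isT).
apply: acB => // x xc.
have := sub x xc; rewrite inE => /orP [xA|//].
by move/negP: hA; case; apply/hasP; exists x.
Qed.

Definition relX (D : digraph) (X : {set dvert D}) : rel (dvert D) :=
  fun x y => [&& x \in X, y \in X & darc x y].

Lemma last_in (D : digraph) (X : {set dvert D}) p a :
  path (relX X) a p -> a \in X -> last a p \in X.
Proof.
elim: p a => [|b p IH] a //= /andP [/and3P [_ bX _] pp] _; exact: IH.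
Qed.

Lemma reach_in (D : digraph) (X : {set dvert D}) s x :
  s \in X -> connect (relX X) s x -> x \in X.
Proof. by move=> sX /connectP [p pp ->]; apply: last_in. Qed.

Lemma reach_X2 (D : digraph) (X R : {set dvert D}) :
  (forall a b, a \in R -> a \in X -> b \in X -> darc a b -> b \in R) ->
  forall p a, path (relX X) a p -> last a p \notin R ->
  a \notin R /\ connect (relX (X :\: R)) a (last a p).
Proof.
move=> clR; elim=> [|b p IH] a /=; first by move=> _ ->.
move=> /andP [/and3P [aX bX ab] pp] lR.
have [bR cb] := IH b pp lR.
have aR : a \notin R by apply: contra bR => aR; exact: (clR a b).
split=> //; apply: connect_trans cb; apply: connect1.
by rewrite /relX !inE aR aX bR bX ab.
Qed.

Lemma reach_X1 (D : digraph) (X : {set dvert D}) s x :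
  s \in X -> connect (relX X) s x -> x != s ->
  exists2 w, w \in [set w in [set y | connect (relX X) s y] :\ s | darc s w] &
     connect (relX ([set y | connect (relX X) s y] :\ s)) w x.
Proof.
move=> sX /connectP [p pp ->] ns.
case: (shortenP pp) ns => p' pp' up' _.
case: p' pp' up' => [|w q]; first by rewrite eqxx.
move=> pp' up' ns.
have cn := path_connect pp'.
move: (pp') => /= /andP [swr pq].
move: (swr) => /and3P [_ wX sw].
move: up' => /= /andP [snq uq].
set X1 := [set y | connect (relX X) s y] :\ s.
have inX1 : forall z, z \in w :: q -> z \in X1.
  move=> z zq; rewrite !inE; apply/andP; split.
    by apply: contra snq => /eqP <-.
  by apply: cn; rewrite inE zq orbT.
exists w.
  by rewrite inE inX1 ?mem_head.
apply/connectP; exists q => //.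
apply: (sub_in_path (P := mem X1)) pq; last by apply/allP.
move=> a b aX1 bX1 /and3P [_ _ ab]; by rewrite /relX aX1 bX1 ab.
Qed.

Definition pinv (D : digraph) (X : {set dvert D}) (P : seq (seq (dvert D)))
  (h : dvert D -> nat) :=
  [/\ all (@is_dipath D) P, uniq (flatten P), (forall x, (x \in flatten P) = (x \in X)),
      (forall p, p \in P -> map h p = rev (iota 0 (size p))) &
      (forall j, acyclic_set [set x in X | h x == j])].

Definition good (D : digraph) (X S : {set dvert D}) := exists P h, @pinv D X P h /\
  (X != set0 -> exists y t, [/\ (y :: t) \in P, y \in S & forall x, x \in X -> h x <= size t]).

Lemma good0 (D : digraph) (X S : {set dvert D}) : X = set0 -> good X S.
Proof.
move=> ->; exists [::], (fun _ => 0); split; last by rewrite eqxx.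
split=> //; first by move=> x; rewrite inE.
move=> j; apply: (acyclic_sub (B := set0)); last exact: acyclic_set0.
by apply/subsetP => x; rewrite !inE.
Qed.

Lemma attach0 (D : digraph) (X : {set dvert D}) s :
  (forall x, (x \in X) = (x == s)) -> pinv X [:: [:: s]] (fun _ => 0).
Proof.
move=> mX; split=> //.
- by move=> x; rewrite mX /= inE.
- by move=> p; rewrite inE => /eqP ->.
- move=> j; apply: (acyclic_sub (B := [set s])); last exact: acyclic_set1.
  by apply/subsetP => x; rewrite !inE mX => /andP [].
Qed.

Lemma attach (D : digraph) (X X1 : {set dvert D}) s P1 h1 y t :
  pinv X1 P1 h1 -> s \notin X1 -> (forall x, (x \in X) = (x == s) || (x \in X1)) ->
  (y :: t) \in P1 -> darc s y -> (forall x, x \in X1 -> h1 x <= size t) ->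
  pinv X ((s :: y :: t) :: rem (y :: t) P1)
        (fun x => if x == s then size (y :: t) else h1 x).
Proof.
move=> [dP uP mP hP aP] sX1 mX ytP sy hmax.
set h := fun x => if x == s then size (y :: t) else h1 x.
have pf := perm_flatten (perm_to_rem ytP).
have inX1 : forall q x, q \in P1 -> x \in q -> x \in X1.
  by move=> q x qP xq; rewrite -mP; apply/flattenP; exists q.
have nsq : forall q, q \in P1 -> s \notin q.
  by move=> q qP; apply/negP => /(inX1 q s qP); rewrite (negbTE sX1).
have hq : forall q, q \in P1 -> map h q = map h1 q.
  move=> q qP; apply/eq_in_map => x xq; rewrite /h.
  case: eqP => // exs; move: (nsq q qP); by rewrite -exs xq.
split.
- rewrite /= andbC; apply/andP; split.
    by apply/allP => q /mem_rem qP; apply: (allP dP).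
  move: (allP dP _ ytP) => /andP [u pth].
  apply/andP; split; first by rewrite nsq //=; exact: u.
  by rewrite /= sy.
- have -> : flatten ((s :: y :: t) :: rem (y :: t) P1) =
     s :: ((y :: t) ++ flatten (rem (y :: t) P1)) by [].
  rewrite cons_uniq -(perm_uniq pf) uP andbT.
  by rewrite -(perm_mem pf) mP.
- move=> x.
  have -> : flatten ((s :: y :: t) :: rem (y :: t) P1) =
     s :: ((y :: t) ++ flatten (rem (y :: t) P1)) by [].
  by rewrite inE mX -(perm_mem pf) mP.
- move=> q; rewrite inE => /orP [/eqP ->|/mem_rem qP]; last by rewrite hq // hP.
  have e : map h (s :: y :: t) = h s :: map h (y :: t) by [].
  by rewrite e (hq _ ytP) (hP _ ytP) /h eqxx -rev_iotaS.
- move=> j; case: (eqVneq j (size (y :: t))) => [->|nj].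
    apply: (acyclic_sub (B := [set s])); last exact: acyclic_set1.
    apply/subsetP => x; rewrite !inE mX /h; case: (eqVneq x s) => [//|_ /= /andP [xX1 /eqP e]].
    by move: (hmax x xX1); rewrite e /=; lia.
  apply: (acyclic_sub (B := [set x in X1 | h1 x == j])); last exact: aP.
  apply/subsetP => x; rewrite !inE mX /h; case: (eqVneq x s) => [_ /= /eqP e|//].
  by move: nj; rewrite -e eqxx.
Qed.

Lemma combine (D : digraph) (X R X2 S : {set dvert D}) s p P1 h1 P2 h2 :
  pinv R P1 h1 -> (s :: p) \in P1 -> s \in S -> (forall x, x \in R -> h1 x <= size p) ->
  pinv X2 P2 h2 ->
  (X2 != set0 -> exists y t, [/\ (y :: t) \in P2, y \in S & forall x, x \in X2 -> h2 x <= size t]) ->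
  (forall x, (x \in X) = (x \in R) || (x \in X2)) -> (forall x, x \in X2 -> x \notin R) ->
  (forall a z, a \in R -> z \in X2 -> ~~ darc a z) -> good X S.
Proof.
move=> [dP1 uP1 mP1 hP1 aP1] spP sS hm1 [dP2 uP2 mP2 hP2 aP2] top2 mX dis nar.
set h := fun x => if x \in R then h1 x else h2 x.
exists (P1 ++ P2), h; split.
  split.
  - by rewrite all_cat dP1 dP2.
  - rewrite flatten_cat cat_uniq uP1 uP2 andbT /=; apply/hasPn => x x2.
    by rewrite mP1; apply: dis; rewrite -mP2.
  - by move=> x; rewrite flatten_cat mem_cat mP1 mP2 mX.
  - move=> q; rewrite mem_cat => /orP [qP|qP].
      rewrite -(hP1 _ qP); apply/eq_in_map => x xq; rewrite /h.
      have -> // : x \in R by rewrite -mP1; apply/flattenP; exists q.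
    rewrite -(hP2 _ qP); apply/eq_in_map => x xq; rewrite /h.
    have xX2 : x \in X2 by rewrite -mP2; apply/flattenP; exists q.
    by rewrite (negbTE (dis _ xX2)).
  - move=> j.
    apply: (acyclic_sub (B := [set x in R | h1 x == j] :|: [set x in X2 | h2 x == j])).
      apply/subsetP => x; rewrite !inE mX /h.
      by case: (boolP (x \in R)) => xR /= => [->|/andP [-> ->]]; rewrite ?orbT.
    apply: acyclic_union; [exact: aP1 | exact: aP2 |].
    move=> a z; rewrite !inE => /andP [aR _] /andP [zX2 _]; exact: nar.
move=> _; case: (eqVneq X2 set0) => [X2e | /top2 [y [t [ytP yS hm2]]]].
  exists s, p; split; [by rewrite mem_cat spP | by [] |].
  move=> x; rewrite mX X2e inE orbF => xR; rewrite /h xR; exact: hm1.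
case: (leqP (size t) (size p)) => c.
  exists s, p; split; [by rewrite mem_cat spP | by [] |].
  move=> x; rewrite mX /h => /orP [xR|xX2]; first by rewrite xR; exact: hm1.
  by rewrite (negbTE (dis _ xX2)); apply: leq_trans (hm2 _ xX2) c.
exists y, t; split; [by rewrite mem_cat ytP orbT | by [] |].
move=> x; rewrite mX /h => /orP [xR|xX2]; last by rewrite (negbTE (dis _ xX2)); exact: hm2.
by rewrite xR; apply: leq_trans (hm1 _ xR) (ltnW c).
Qed.

Lemma main_ind (D : digraph) n : forall X S : {set dvert D}, #|X| <= n -> S \subset X ->
  (forall x, x \in X -> exists2 s, s \in S & connect (relX X) s x) -> good X S.
Proof.
elim: n => [|n IH] X S cX SX reach.
  by apply: good0; apply/eqP; rewrite -cards_eq0 -leqn0.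
case: (eqVneq X set0) => [->|Xn]; first exact: good0.
have /set0Pn [x0 x0X] := Xn.
have [s sS _] := reach x0 x0X.
have sX := subsetP SX s sS.
set R := [set y | connect (relX X) s y].
have sR : s \in R by rewrite inE connect0.
have RX : forall x, x \in R -> x \in X by move=> x; rewrite inE; apply: reach_in.
have clR : forall a b, a \in R -> a \in X -> b \in X -> darc a b -> b \in R.
  move=> a b; rewrite !inE => aR aX bX ab; apply: connect_trans aR _.
  by apply: connect1; rewrite /relX aX bX ab.
set X1 := R :\ s.
set S1 := [set w in X1 | darc s w].
set X2 := X :\: R.
set S2 := S :\: R.
have mX1 : forall x, (x \in R) = (x == s) || (x \in X1).
  by move=> x; rewrite in_setD1; case: eqVneq => [->|] //; rewrite sR.
have g1 : good X1 S1.
  apply: IH.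
  - have : X1 \proper X.
      apply/properP; split; first by apply/subsetP => x; rewrite in_setD1 => /andP [_ /RX].
      by exists s => //; rewrite !inE eqxx.
    by move/proper_card => c; rewrite -ltnS; apply: leq_trans c cX.
  - by apply/subsetP => x; rewrite inE => /andP [].
  - move=> x; rewrite in_setD1 => /andP [xs xR].
    move: xR; rewrite inE => xR.
    exact: (reach_X1 sX xR xs).
have [P' [h' [p [invR spP hmR]]]] : exists P' h' p, [/\ @pinv D R P' h', (s :: p) \in P' &
      forall x, x \in R -> h' x <= size p].
  case: g1 => P1 [h1 [inv1 top1]].
  case: (eqVneq X1 set0) => [X1e | /top1 [y [t [ytP yS hm]]]].
    exists [:: [:: s]], (fun _ => 0), [::]; split => //; last by rewrite inE.
    by apply: attach0 => x; rewrite mX1 X1e inE orbF.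
  exists ((s :: y :: t) :: rem (y :: t) P1), (fun x => if x == s then size (y :: t) else h1 x), (y :: t).
  split; first apply: (attach inv1) => //.
  - by rewrite !inE eqxx.
  - by move: yS; rewrite inE => /andP [].
  - by rewrite inE eqxx.
  - move=> x; rewrite mX1 => /orP [/eqP ->|xX1]; first by rewrite eqxx.
    by case: eqVneq => // _; apply: leq_trans (hm _ xX1) _.
have g2 : good X2 S2.
  apply: IH.
  - have : X2 \proper X.
      apply/properP; split; first by apply/subsetP => x; rewrite !inE => /andP [].
      by exists s => //; rewrite in_setD sR.
    by move/proper_card => c; rewrite -ltnS; apply: leq_trans c cX.
  - apply/subsetP => x; rewrite !inE => /andP [-> /= xS]; exact: (subsetP SX).
  - move=> x; rewrite inE => /andP [xR xX].
    have [s' s'S /connectP [q pq xe]] := reach x xX.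
    have := reach_X2 clR pq; rewrite -xe => /(_ xR) [s'R c].
    by exists s' => //; rewrite inE s'R.
case: g2 => P2 [h2 [inv2 top2]].
apply: (combine invR spP sS hmR inv2) => //.
- move=> /top2 [y [t [ytP yS hm]]]; exists y, t; split => //.
  by move: yS; rewrite inE => /andP [].
- by move=> x; rewrite in_setD; case: (boolP (x \in R)) => [/RX ->|] //=.
- by move=> x; rewrite inE => /andP [].
- move=> a z aR; rewrite inE => /andP [zR zX]; apply/negP => az.
  by move: zR; rewrite (clR a z aR (RX a aR) zX az).
Qed.

Lemma sum_ord_lt m L : \sum_(j < L) (j < m) = minn m L.
Proof.
elim: L => [|L IH]; first by rewrite big_ord0 minn0.
rewrite big_ord_recr /= IH; lia.
Qed.

Lemma count_take_sorted (T : Type) (r : rel T) (a : pred T) k s :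
  transitive r -> (forall x y, r x y -> a y -> a x) -> sorted r s ->
  count a (take k s) = minn (count a s) k.
Proof.
move=> tr mono; elim: s k => [|x s IH] k /=; first by rewrite min0n.
move=> ps; have ss := path_sorted ps.
case: k => [|k] /=; first by rewrite minn0.
case ax: (a x) => /=; first by rewrite IH //; lia.
have c0 : count a s = 0.
  have al : all (predC a) s.
    apply: sub_all (order_path_min tr ps) => y rxy /=; apply/negP => ay.
    by move: (mono _ _ rxy ay); rewrite ax.
  move: al; rewrite all_count => /eqP e; have := count_predC a s; lia.
rewrite c0 /= IH // c0 min0n //.
Qed.

Lemma sum_count (T : Type) (a : pred T) (s : seq T) :
  \sum_(q <- s) (a q : nat) = count a s.
Proof.
by elim: s => [|x s IH]; rewrite ?big_nil ?big_cons ?IH.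
Qed.

Lemma card_count (T : finType) (s : seq T) (a : pred T) :
  uniq s -> (forall x, x \in s) -> #|[set x | a x]| = count a s.
Proof.
move=> us alls; rewrite -size_filter; have u := filter_uniq a us.
rewrite -(card_uniqP u); apply: eq_card => x; by rewrite inE mem_filter alls andbT.
Qed.
Unset Implicit Arguments.

Theorem mainTheorem1 (D : digraph) (k : nat) (hk : 0 < k) :
  pi_k D k <= alpha'_k D k /\ chi'_k D k <= lambda_k D k.
Proof.
have [P [h [[dP uP mP hP aP] _]]] : good [set: dvert D] [set: dvert D].
  apply: (@main_ind D #|[set: dvert D]|) => // x _; exists x; by rewrite ?inE ?connect0.
have allP' : forall x, x \in flatten P by move=> x; rewrite mP inE.
have cnt : forall (a : pred nat), count (fun x => a (h x)) (flatten P) =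
    sumn [seq count a (iota 0 (size q)) | q <- P].
  move=> a; rewrite count_flatten; congr sumn; apply/eq_in_map => q qP.
  by rewrite -(count_map h a) (hP q qP) count_rev.
have acA : forall j, acyclic_set [set x | h x == j].
  by move=> j; apply: acyclic_sub (aP j); apply/subsetP => x; rewrite !inE.
split.
  have e1 : path_knorm k P = #|[set x | h x < k]|.
    rewrite (card_count (fun x => h x < k) uP allP') (cnt (fun i => i < k)).
    rewrite /path_knorm sumnE big_map; apply: eq_bigr => q _; by rewrite count_iota_lt.
  have pk : pi_pred D k (path_knorm k P).
    apply/asboolP; exists P; split => //; apply/andP; split => //.
    apply: uniq_perm => //; [exact: enum_uniq | by move=> x; rewrite mem_enum allP'].
  have ak : alpha_pred D k #|[set x | h x < k]|.
    apply/asboolP; exists (fun i : 'I_k => [set x | h x == i]); split; last split.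
    - move=> i; exact: acA.
    - move=> i j ij; rewrite -setI_eq0; apply/eqP/setP => x; rewrite !inE.
      apply/negbTE/negP => /andP [/eqP e1' /eqP e2].
      by move/eqP: ij; apply; apply: val_inj; rewrite /= -e1' -e2.
    - apply: eq_card => x; rewrite [in RHS]inE; apply/bigcupP/idP => [[i _]|hx].
        by rewrite inE => /eqP ->.
      by exists (Ordinal hx) => //; rewrite inE.
  rewrite /pi_k /alpha'_k.
  case: ex_minnP => m _ /(_ _ pk) mle.
  case: ex_maxnP => m' _ /(_ _ ak) m'ge.
  by rewrite (leq_trans mle) // e1.
set L := \max_(x : dvert D) (h x).+1.
set A := fun j : nat => [set x | h x == j].
have hL : forall x, h x < L by move=> x; rewrite /L; exact: (@leq_bigmax (dvert D) (fun y => (h y).+1) x).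
have Anon : forall j, j < L -> exists x, h x = j.
  move=> j jL; case: (pickP (fun x => j <= h x)) => [x jx|none]; last first.
    have : L <= j by apply/bigmax_leqP => x _; rewrite ltnNge none.
    by rewrite leqNgt jL.
  have /flattenP [q qP xq] := allP' x.
  have : h x \in map h q by apply: map_f.
  rewrite (hP q qP) mem_rev mem_iota /= => hxq.
  have : j \in map h q.
    by rewrite (hP q qP) mem_rev mem_iota /=; apply: leq_ltn_trans jx hxq.
  by move/mapP => [z _ ->]; exists z.
have cardA : forall j, #|A j| = count (fun q => j < size q) P.
  move=> j; rewrite (card_count (fun x => h x == j) uP allP') (cnt (fun i => i == j)).
  rewrite -sumn_count; congr sumn; apply/eq_map => q; by rewrite count_iota_eq.
set S := [set A (val j) | j : 'I_L].
have injA : {in predT &, injective (fun j : 'I_L => A (val j))}.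
  move=> i j _ _ e; apply: val_inj.
  have [x hx] := Anon _ (ltn_ord i).
  have : x \in A (val i) by rewrite inE hx.
  by rewrite e inE => /eqP <-.
have ck : chi_pred D k (\sum_(j < L) minn #|A j| k).
  apply/asboolP; exists S; split; [|split].
  - apply/and3P; split.
    + apply/eqP/setP => x; rewrite in_setT; apply/bigcupP.
      exists (A (h x)); last by rewrite inE.
      by apply/imsetP; exists (Ordinal (hL x)).
    + apply/trivIsetP => B1 B2 /imsetP [i _ ->] /imsetP [j _ ->] ne.
      rewrite -setI_eq0; apply/eqP/setP => x; rewrite !inE.
      apply/negbTE/negP => /andP [/eqP e1 /eqP e2]; move: ne; by rewrite -e1 -e2 eqxx.
    + apply/imsetP => [[j _ e]].
      have [x hx] := Anon _ (ltn_ord j).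
      have : x \in A (val j) by rewrite inE hx.
      by rewrite -e inE.
  - by move=> B /imsetP [j _ ->]; exact: acA.
  - by rewrite big_imset.
set r := fun p q : seq (dvert D) => size q <= size p.
set Q := take k (sort r P).
have ps : perm_eq (sort r P) P by rewrite perm_sort.
have tr : transitive r by move=> y x z; rewrite /r => ? ?; lia.
have sr : sorted r (sort r P) by apply: sort_sorted => x y; rewrite /r leq_total.
have lk : lambda_pred D k (size (flatten Q)).
  apply/asboolP; exists Q; split; [|split; [|split]] => //.
  - by rewrite size_take; case: ltnP.
  - apply/allP => q /mem_take; rewrite (perm_mem ps) => qP; exact: (allP dP).
  - have : uniq (flatten (sort r P)) by rewrite (perm_uniq (perm_flatten ps)).
    by rewrite -(cat_take_drop k (sort r P)) flatten_cat cat_uniq => /andP [].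
have le : \sum_(j < L) minn #|A j| k <= size (flatten Q).
  rewrite size_flatten sumnE /shape big_map.
  apply: (@leq_trans (\sum_(q <- Q) \sum_(j < L) (j < size q))).
    rewrite exchange_big /=; apply: leq_sum => j _.
    rewrite (sum_count (fun q => j < size q)) cardA /Q.
    rewrite (count_take_sorted _ tr) //; last by move=> x y; rewrite /r => ? ?; lia.
    by rewrite (permP ps).
  by apply: leq_sum => q _; rewrite sum_ord_lt geq_minl.
rewrite /chi'_k /lambda_k.
case: ex_minnP => m _ /(_ _ ck) mle.
case: ex_maxnP => m' _ /(_ _ lk) m'ge.
exact: leq_trans mle (leq_trans le m'ge).
Qed.
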